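(* Let $T$ be a coherent LCMM tree, $\boldsymbol\theta=\boldsymbol\theta(T)$, $\boldsymbol\eta=\boldsymbol\eta(T)$, and let $\boldsymbol\mu=\tilde{\boldsymbol p}(\boldsymbol\theta+\mathbf A\boldsymbol\eta)$ be the current LCMM price vector. Let $\alpha\in\Omega$ and $I=[\alpha,1)$. Consider the following procedure (Algorithm 3). Initialize $z\gets\mathit{root}$, $\mu_z\gets1$, $\mathit{price}\gets0$. While $\alpha_z\ne\alpha$ and $z$ is not a leaf of $T$: let $z_l=\mathrm{left}(z)$, $z_r=\mathrm{right}(z)$, $k=\mathrm{level}(z_l)$; compute $e_l=\exp\{(\theta_{z_l}+B_k\eta_{z_l})/b_k\}$, $e_r=\exp\{(\theta_{z_r}+B_k\eta_{z_r})/b_k\}$, $\mu_{z_l}\gets\frac{e_l}{e_l+e_r}\mu_z$, $\mu_{z_r}\gets\frac{e_r}{e_l+e_r}\mu_z$; if $\alpha<\alpha_{z_r}$ set $z\gets z_l$ and $\mathit{price}\gets\mathit{price}+\mu_{z_r}$, else set $z\gets z_r$. Return $\mathit{price}+\frac{\beta_z-\alpha}{\beta_z-\alpha_z}\mu_z$. Then every value $\mu_{z}$ computed equals the corresponding coordinate of $\boldsymbol\mu$, the procedure returns the LCMM price of the bundle security for $I$, namely $\sum_{u\in\mathcal Z_K:\ I_u\subseteq I}\mu_u$, and it runs in time $\mathcal O(\mathrm{prec}(\alpha))$ (arithmetic operations counted as unit cost), where $\mathrm{prec}(\alpha)$ is the smallest integer $k\ge0$ such that $\alpha$ is an integer multiple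 of $2^{-k}$.
   Context: Fix an integer $K\ge1$, $N=2^K$, $\Omega=\{j/N:j=0,\dots,N-1\}$. Let $T^*$ be the complete binary tree of depth $K$ whose nodes are intervals: the root (level $0$) has $I_{\mathit{root}}=[0,1)$, and each node $z$ at level $k<K$ with $I_z=[\alpha_z,\beta_z)$ has children $\mathrm{left}(z)$, $\mathrm{right}(z)$ at level $k+1$ with intervals $[\alpha_z,\frac{\alpha_z+\beta_z}2)$ and $[\frac{\alpha_z+\beta_z}2,\beta_z)$. Let $\mathcal Z^*$ be its node set, $\mathcal Z_k$ the nodes at level $k$, $\mathrm{level}(z)$ the level of $z$, and $\mathcal Y^*=\mathcal Z^*\setminus\mathcal Z_K$. Fix liquidity parameters $b_k>0$ ($k=0,\dots,K$) and set $B_\ell=\sum_{k=\ell+1}^K b_k$ for $\ell=-1,\dots,K$. For $\tilde{\boldsymbol\theta}\in\mathbb R^{\mathcal Z^*}$ the direct-sum price vector is $\tilde p_z(\tilde{\boldsymbol\theta})=e^{\tilde\theta_z/b_k}/\sum_{z'\in\mathcal Z_k}e^{\tilde\theta_{z'}/b_k}$ for $z\in\mathcal Z_k$ (the gradient of $\tilde C(\tilde{\boldsymbol\theta})=\sum_k b_k\log\sum_{z\in\mathcal Z_k}e^{\tilde\theta_z/b_k}$). The constraint matrix $\mathbf A\in\mathbb R^{\mathcal Z^*\times\mathcal Y^*}$ has entries $A_{zy}=B_{\mathrm{level}(z)}$ if $z=y$, $-b_{\mathrm{level}(z)}$ if $I_z\subsetneq I_y$, and $0$ otherwise. An LCMM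 tree $T$ is a subtree of $T^*$ containing the root in which each node has either zero or two children in $T$, each node $z$ annotated with reals $\theta_z$ and $\eta_z$ (with $\eta_z$ treated as $0$ if $z\in\mathcal Z_K$). It represents $\boldsymbol\theta(T)\in\mathbb R^{\mathcal Z^*}$ and $\boldsymbol\eta(T)\in\mathbb R^{\mathcal Y^*}$ whose coordinates equal the annotations for nodes in $T$ and are $0$ for nodes not in $T$. $T$ is coherent if $\mathbf A^\top\tilde{\boldsymbol p}(\boldsymbol\theta(T)+\mathbf A\boldsymbol\eta(T))=\mathbf 0$; in that case $\boldsymbol\eta(T)$ minimizes $\boldsymbol\eta\mapsto\tilde C(\boldsymbol\theta(T)+\mathbf A\boldsymbol\eta)$ and the LCMM price vector is $\tilde{\boldsymbol p}(\boldsymbol\theta(T)+\mathbf A\boldsymbol\eta(T))$. *)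

(* Defs.v *)
From HB Require Import structures.
From mathcomp Require Import all_boot all_order all_algebra.
From mathcomp Require Import reals.
From mathcomp.analysis Require Import sequences exp.
Set Implicit Arguments. Unset Strict Implicit. Unset Printing Implicit Defensive.
Import Order.TTheory GRing.Theory Num.Theory.
Local Open Scope ring_scope.

(* A node of the complete binary tree T^* is a pair (level k, index j),
   with interval I_z = [j/2^k, (j+1)/2^k). *)
Definition node := (nat * nat)%type.
Definition level (z : node) : nat := z.1.
Definition idx (z : node) : nat := z.2.
Definition root : node := (0%N, 0%N).
Definition left (z : node) : node := (z.1.+1, (z.2).*2).
Definition right (z : node) : node := (z.1.+1, (z.2).*2.+1).
Definition parent (z : node) : node := (z.1.-1, (z.2)./2).

Definition valid (K : nat) (z : node) : bool := (z.1 <= K)%N && (z.2 < 2 ^ z.1)%N.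

Section Defs.
Variable R : realType.

Definition nalpha (z : node) : R := (z.2)%:R / 2%:R ^+ z.1.
Definition nbeta (z : node) : R := (z.2.+1)%:R / 2%:R ^+ z.1.

(* sum over Z^* = all nodes of levels 0..K, and over Y^* = levels 0..K-1 *)
Definition sumZ (K : nat) (F : node -> R) : R :=
  \sum_(k < K.+1) \sum_(j < 2 ^ k) F (k : nat, j : nat).
Definition sumY (K : nat) (F : node -> R) : R :=
  \sum_(k < K) \sum_(j < 2 ^ k) F (k : nat, j : nat).

Definition Bsum (K : nat) (b : nat -> R) (l : nat) : R :=
  \sum_(l.+1 <= k < K.+1) b k.

Definition strict_sub (z y : node) : bool :=
  [&& nalpha y <= nalpha z, nbeta z <= nbeta y & z != y].

Definition Amat (K : nat) (b : nat -> R) (z y : node) : R :=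
  if z == y then Bsum K b (level z)
  else if strict_sub z y then - b (level z) else 0.

Definition Amul (K : nat) (b : nat -> R) (eta : node -> R) (z : node) : R :=
  sumY K (fun y => Amat K b z y * eta y).

Definition ptilde (b : nat -> R) (x : node -> R) (z : node) : R :=
  expR (x z / b (level z)) /
  \sum_(j < 2 ^ level z) expR (x (level z, j : nat) / b (level z)).

(* LCMM tree given as a boolean membership predicate on nodes *)
Definition is_LCMM_tree (K : nat) (inT : node -> bool) : Prop :=
  [/\ inT root,
      forall z, inT z -> valid K z,
      forall z, inT z -> z != root -> inT (parent z) &
      forall z, inT z -> inT (left z) = inT (right z)].

Definition thetaT (inT : node -> bool) (theta : node -> R) (z : node) : R :=
  if inT z then theta z else 0.
Definition etaT (K : nat) (inT : node -> bool) (eta : node -> R) (y : node) : R :=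
  if inT y && (level y < K)%N then eta y else 0.

Definition lcmm_arg K b inT theta eta (z : node) : R :=
  thetaT inT theta z + Amul K b (etaT K inT eta) z.

Definition coherent K b inT theta eta : Prop :=
  forall y : node, valid K y -> (level y < K)%N ->
    sumZ K (fun z => Amat K b z y * ptilde b (lcmm_arg K b inT theta eta) z) = 0.

Definition lcmm_price K b inT theta eta : node -> R :=
  ptilde b (lcmm_arg K b inT theta eta).

Definition bundle_price K (mu : node -> R) (alpha : R) : R :=
  \sum_(j < 2 ^ K | (alpha <= nalpha (K, j : nat)) && (nbeta (K, j : nat) <= 1)) mu (K, j : nat).

(* State of Algorithm 3: current node z, mu_z, price, list of all
   computed pairs (node, computed mu value), number of loop iterations. *)
Record alg_state := AlgState {
  st_z : node; st_mu : R; st_price : R; st_log : seq (node * R); st_iter : nat }.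

(* The while loop of Algorithm 3, run with fuel (K iterations always suffice
   since each iteration increases the level of z and leaves of T have level <= K). *)
Fixpoint alg_loop K (b : nat -> R) (inT : node -> bool) (theta eta : node -> R)
    (alpha : R) (fuel : nat) (s : alg_state) : alg_state :=
  match fuel with
  | 0%N => s
  | f.+1 =>
    let z := st_z s in
    if (nalpha z != alpha) && inT (left z) then
      let zl := left z in let zr := right z in let k := level zl in
      let el := expR ((thetaT inT theta zl + Bsum K b k * etaT K inT eta zl) / b k) in
      let er := expR ((thetaT inT theta zr + Bsum K b k * etaT K inT eta zr) / b k) in
      let mul := el / (el + er) * st_mu s in
      let mur := er / (el + er) * st_mu s in
      let log' := st_log s ++ [:: (zl, mul); (zr, mur)] in
      if alpha < nalpha zr then
        alg_loop K b inT theta eta alpha f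
          (AlgState zl mul (st_price s + mur) log' (st_iter s).+1)
      else
        alg_loop K b inT theta eta alpha f
          (AlgState zr mur (st_price s) log' (st_iter s).+1)
    else s
  end.

Definition alg_init : alg_state := AlgState root 1 0 [:: (root, 1)] 0%N.

Definition alg_final K b inT theta eta (alpha : R) : alg_state :=
  alg_loop K b inT theta eta alpha K alg_init.

Definition alg_output K b inT theta eta (alpha : R) : R :=
  let s := alg_final K b inT theta eta alpha in
  st_price s + (nbeta (st_z s) - alpha) / (nbeta (st_z s) - nalpha (st_z s)) * st_mu s.

Definition dyadic_at (a : R) (k : nat) : Prop :=
  exists m : int, a = m%:~R / 2%:R ^+ k.
Definition is_prec (a : R) (p : nat) : Prop :=
  dyadic_at a p /\ forall k : nat, (k < p)%N -> ~ dyadic_at a k.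

End Defs.

(* Main.v *)
Require Import Defs.
From HB Require Import structures.
From mathcomp Require Import all_boot all_order all_algebra.
From mathcomp Require Import reals.
From mathcomp.analysis Require Import sequences exp.
From mathcomp Require Import zify ring lra.
Import Order.TTheory GRing.Theory Num.Theory.
Local Open Scope ring_scope.
Set Warnings "-notation-overridden".
Lemma two_pow_gt0 (R : realType) k : (0 : R) < 2%:R ^+ k.
Proof. by rewrite exprn_gt0. Qed.

Lemma ler_dy (R : realType) a k c l :
  ((a%:R / 2%:R ^+ k : R) <= c%:R / 2%:R ^+ l) = (a * 2 ^ l <= c * 2 ^ k)%N.
Proof.
rewrite ler_pdivrMr ?two_pow_gt0 // mulrAC ler_pdivlMr ?two_pow_gt0 //.
by rewrite -!natrX -!natrM ler_nat.
Qed.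

Lemma ltr_dy (R : realType) a k c l :
  ((a%:R / 2%:R ^+ k : R) < c%:R / 2%:R ^+ l) = (a * 2 ^ l < c * 2 ^ k)%N.
Proof.
rewrite ltr_pdivrMr ?two_pow_gt0 // mulrAC ltr_pdivlMr ?two_pow_gt0 //.
by rewrite -!natrX -!natrM ltr_nat.
Qed.

Lemma divn_range P a c : (0 < P)%N -> (c * P <= a < c.+1 * P)%N = ((a %/ P)%N == c).
Proof.
move=> HP; rewrite -leq_divRL // -ltn_divLR //.
by apply/idP/eqP => [/andP[H1 H2]|->]; [lia| rewrite leqnn ltnSn].
Qed.

Lemma strict_sub_nat (R : realType) k a m c :
  strict_sub R (k, a) (m, c) = (m < k)%N && ((a %/ 2 ^ (k - m))%N == c).
Proof.
rewrite /strict_sub /nalpha /nbeta /= !ler_dy.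
case: (ltnP m k) => H.
- have E : (2 ^ k = 2 ^ (k - m) * 2 ^ m)%N by rewrite -expnD subnK // ltnW.
  have -> : ((k, a) != (m, c)) = true.
    by apply/eqP; case=> Ekm _; move: H; rewrite Ekm ltnn.
  rewrite andbT -divn_range ?expn_gt0 // E !mulnA !leq_pmul2r ?expn_gt0 //.
- apply/negbTE/and3P; case=> H1 H2 H3.
  have E : (2 ^ m = 2 ^ (m - k) * 2 ^ k)%N by rewrite -expnD subnK.
  rewrite E !mulnA !leq_pmul2r ?expn_gt0 // in H1 H2.
  case: (eqVneq m k) => [Emk|Nmk].
  + subst m; rewrite subnn expn0 !muln1 in H1 H2.
    have Eac : a = c by lia.
    by subst c; rewrite eqxx in H3.
  + have X2 : (2 <= 2 ^ (m - k))%N.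
      by rewrite -{1}(expn1 2) leq_exp2l // subn_gt0 ltn_neqAle eq_sym Nmk H.
    lia.
Qed.
Definition Dsum (R : realType) (mu : node -> R) (k : nat) (y : node) : R :=
  \sum_((y.2 * 2 ^ (k - y.1))%N <= j < (y.2.+1 * 2 ^ (k - y.1))%N) mu (k, j).
Arguments Dsum {R}.

Lemma D_self (R : realType) (mu : node -> R) y : Dsum mu y.1 y = mu y.
Proof. by rewrite /Dsum subnn expn0 !muln1 big_nat1; case: y. Qed.

Lemma D_split (R : realType) (mu : node -> R) k y : (y.1 < k)%N ->
  Dsum mu k y = Dsum mu k (left y) + Dsum mu k (right y).
Proof.
case: y => l c /= H; rewrite /Dsum /left /right /=.
have E : (2 ^ (k - l) = 2 * 2 ^ (k - l.+1))%N by rewrite -expnS subnSK.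
rewrite E; set e := (2 ^ (k - l.+1))%N.
have He : (0 < e)%N by rewrite expn_gt0.
have H1 : (c * (2 * e) <= c.*2.+1 * e)%N by lia.
have H2 : (c.*2.+1 * e <= c.+1 * (2 * e))%N by lia.
rewrite (@big_cat_nat _ _ _ (c.*2.+1 * e)%N _ _ _ _ H1 H2) /=.
have E1 : (c * (2 * e) = c.*2 * e)%N by lia.
have E2 : (c.+1 * (2 * e) = c.*2.+1.+1 * e)%N by lia.
by rewrite E1 E2.
Qed.

Lemma sum_range_ind (R : realType) n a bb (F : nat -> R) : (bb <= n)%N ->
  \sum_(j < n) (if (a <= j < bb)%N then F j else 0) = \sum_(a <= j < bb) F j.
Proof.
move=> Hn; rewrite -(big_mkord xpredT (fun j => if (a <= j < bb)%N then F j else 0)).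
case: (leqP a bb) => Hab.
- have Han : (a <= n)%N by apply: leq_trans Hn.
  rewrite (big_cat_nat _ (n := a)) //=.
  rewrite [X in _ + X](big_cat_nat _ (n := bb)) //=.
  set G := (fun j => if (a <= j < bb)%N then F j else 0).
  have Z1 : \sum_(0 <= i < a) G i = 0.
    rewrite big_nat_cond big1 // => j /andP[/andP[_ H] _].
    by rewrite /G leqNgt H.
  have Z2 : \sum_(bb <= i < n) G i = 0.
    rewrite big_nat_cond big1 // => j /andP[/andP[H _] _].
    by rewrite /G ltnNge H andbF.
  rewrite Z1 Z2 add0r addr0.
  by apply: eq_big_nat => j /andP[H1 H2]; rewrite /G H1 H2.
- rewrite [RHS]big_geq; last exact: ltnW.
  rewrite big1 // => j _.
  case: ifP => // /andP[H1 H2].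
  by move: (ltn_trans (leq_ltn_trans H1 H2) Hab); rewrite ltnn.
Qed.

Lemma coh_level (R : realType) K (b : nat -> R) (mu : node -> R) (y : node) (k : nat) :
  (y.2 < 2 ^ y.1)%N ->
  \sum_(j < 2 ^ k) Amat K b (k, j : nat) y * mu (k, j : nat) =
  if k == y.1 then Bsum K b y.1 * mu y
  else if (y.1 < k)%N then - b k * Dsum mu k y else 0.
Proof.
case: y => l c /= Hc; rewrite /Amat /level /=.
case: (ltngtP k l) => Hkl.
- rewrite big1 // => j _; rewrite ifF; last first.
    by apply/negbTE/eqP; case=> E _; move: Hkl; rewrite E ltnn.
  by rewrite strict_sub_nat ltnNge (ltnW Hkl) /= mul0r.
- have HP : (0 < 2 ^ (k - l))%N by rewrite expn_gt0.
  have Hb : (c.+1 * 2 ^ (k - l) <= 2 ^ k)%N.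
    have -> : (2 ^ k = 2 ^ l * 2 ^ (k - l))%N by rewrite -expnD subnKC // ltnW.
    by rewrite leq_mul2r Hc orbT.
  rewrite /Dsum /= mulr_sumr -(@sum_range_ind _ _ _ _ _ Hb).
  apply: eq_bigr => j _; rewrite ifF; last first.
    by apply/negbTE/eqP; case=> E _; move: Hkl; rewrite E ltnn.
  rewrite strict_sub_nat Hkl /= -divn_range //.
  by case: ifP => _; rewrite ?mul0r.
- subst k.
  have Hb : (c.+1 <= 2 ^ l)%N by [].
  have -> : Bsum K b l * mu (l, c) = \sum_(c <= j < c.+1) (Bsum K b l * mu (l, j)).
    by rewrite big_nat1.
  rewrite -(@sum_range_ind _ _ _ _ _ Hb).
  apply: eq_bigr => j _.
  rewrite strict_sub_nat ltnn /=.
  have -> : ((l, (j : nat)) == (l, c)) = (c <= j < c.+1)%N.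
    rewrite xpair_eqE eqxx /= ltnS; apply/eqP/idP => [->|?]; [by rewrite leqnn|lia].
  by case: ifP => _; rewrite ?mul0r.
Qed.

Lemma coh_sum (R : realType) K (b : nat -> R) (mu : node -> R) (y : node) :
  valid K y ->
  sumZ K (fun z => Amat K b z y * mu z) =
  Bsum K b y.1 * mu y - \sum_(y.1.+1 <= k < K.+1) b k * Dsum mu k y.
Proof.
case/andP=> HlK Hc; rewrite /sumZ.
under eq_bigr => k _ do rewrite coh_level //.
rewrite -(big_mkord xpredT (fun k => if k == y.1 then Bsum K b y.1 * mu y
  else if (y.1 < k)%N then - b k * Dsum mu k y else 0)).
have H0 : (0 <= y.1)%N by [].
have H1 : (y.1 <= y.1.+1)%N by [].
have H2 : (y.1.+1 <= K.+1)%N by [].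
rewrite (@big_cat_nat _ _ _ y.1 _ _ _ _ H0 (leq_trans H1 H2)) /=.
rewrite [X in _ + X](@big_cat_nat _ _ _ y.1.+1 _ _ _ _ H1 H2) /=.
rewrite big_nat_cond big1 ?add0r; last first.
  by move=> k /andP[/andP[_ H] _]; rewrite (ltn_eqF H) ltnNge (ltnW H).
rewrite big_nat1 eqxx -sumrN; congr (_ + _).
apply: eq_big_nat => k /andP[Hk _]; by rewrite gtn_eqF // Hk mulNr.
Qed.
Lemma Bsum_gt0 (R : realType) K (b : nat -> R) l :
  (forall k : nat, (k <= K)%N -> 0 < b k) -> (l < K)%N -> 0 < Bsum K b l.
Proof.
move=> Hb Hl; rewrite /Bsum big_ltn ?ltnS //.
apply: ltr_wpDr; last exact: Hb.
rewrite big_nat_cond sumr_ge0 // => k /andP[/andP[_ Hk] _].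
by apply/ltW/Hb; rewrite -ltnS.
Qed.

Lemma valid_left K z : valid K z -> (z.1 < K)%N -> valid K (left z).
Proof.
case: z => l c /andP[/= H1 H2] H3; rewrite /valid /left /= H3 /= expnS.
by rewrite -muln2 mulnC ltn_pmul2l.
Qed.

Lemma valid_right K z : valid K z -> (z.1 < K)%N -> valid K (right z).
Proof.
case: z => l c /andP[/= H1 H2] H3; rewrite /valid /right /= H3 /= expnS.
lia.
Qed.

Lemma consist_D (R : realType) K (b : nat -> R) (mu : node -> R) :
  (forall k : nat, (k <= K)%N -> 0 < b k) ->
  (forall y, valid K y -> (y.1 < K)%N -> sumZ K (fun z => Amat K b z y * mu z) = 0) ->
  forall y, valid K y -> forall k, (y.1 <= k <= K)%N -> Dsum mu k y = mu y.
Proof.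
move=> Hb Hcoh.
suff H : forall d y, valid K y -> (y.1 + d = K)%N ->
    forall k, (y.1 <= k <= K)%N -> Dsum mu k y = mu y.
  move=> y Hy k Hk; apply: (H (K - y.1)%N) => //.
  by case/andP: Hy => Hy _; rewrite subnKC.
elim=> [|d IH] y Hy Hd k /andP[Hk1 Hk2].
  have -> : k = y.1 by lia.
  exact: D_self.
have HyK : (y.1 < K)%N by lia.
have Hl := valid_left _ _ Hy HyK; have Hr := valid_right _ _ Hy HyK.
set S := mu (left y) + mu (right y).
have HD : forall k, (y.1 < k <= K)%N -> Dsum mu k y = S.
  move=> k' /andP[H1 H2]; rewrite D_split //.
  by rewrite !IH //= ?H1 ?H2 //; rewrite /= addSnnS.
have Hmu : mu y = S.
  have := Hcoh y Hy HyK; rewrite coh_sum //.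
  rewrite (eq_big_nat _ _ (F2 := fun k => b k * S)); last first.
    by move=> k' /andP[H1 H2]; rewrite HD // H1 -ltnS H2.
  rewrite -mulr_suml -/(Bsum K b y.1) -mulrBr => /eqP.
  rewrite mulf_eq0 => /orP[/eqP HB|]; last by rewrite subr_eq0 => /eqP.
  by move: (Bsum_gt0 _ _ _ _ Hb HyK); rewrite HB ltxx.
case: (eqVneq k y.1) => [->|Hne]; first exact: D_self.
by rewrite HD ?Hmu // Hk2 andbT ltn_neqAle eq_sym Hne Hk1.
Qed.
Lemma eq_range1 a j : (a <= j < a.+1)%N = (j == a).
Proof. by rewrite ltnS -eqn_leq eq_sym. Qed.

Definition gof (R : realType) (b : nat -> R) (z y : node) : R :=
  if z == y then 0 else if strict_sub R z y then - b (level z) else 0.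
Arguments gof {R}.

Definition offd (R : realType) K (b : nat -> R) (et : node -> R) (z : node) : R :=
  sumY K (fun y => gof b z y * et y).
Arguments offd {R}.

Lemma sumY_split (R : realType) K (F G : node -> R) :
  sumY K (fun y => F y + G y) = sumY K F + sumY K G.
Proof. by rewrite /sumY -big_split; apply: eq_bigr => k _; rewrite -big_split. Qed.

Lemma diag_sum (R : realType) K (c : R) (et : node -> R) z : valid K z ->
  sumY K (fun y => (if z == y then c else 0) * et y) = if (z.1 < K)%N then c * et z else 0.
Proof.
case: z => l j /andP[/= HlK Hj]; rewrite /sumY.
have E : forall k : 'I_K, \sum_(i < 2 ^ k) (if (l, j) == (k : nat, i : nat) then c else 0) * et (k : nat, i : nat)
    = if ((k : nat) == l) then c * et (l, j) else 0.
  move=> k; case: (eqVneq (k : nat) l) => [Ek|Nk].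
    have Hb : (j.+1 <= 2 ^ k)%N by rewrite Ek.
    transitivity (\sum_(j <= i < j.+1) c * et (l, i)); last by rewrite big_nat1.
    rewrite -(@sum_range_ind _ _ _ _ _ Hb).
    apply: eq_bigr => i _; rewrite eq_range1 xpair_eqE.
    rewrite -Ek eqxx /= eq_sym.
    by case: (eqVneq (i : nat) j) => [->|]; rewrite ?mul0r.
  rewrite big1 // => i _; rewrite ifF ?mul0r //; apply/negbTE.
  by rewrite xpair_eqE eq_sym (negbTE Nk).
rewrite (eq_bigr _ (fun k _ => E k)).
case: ltnP => HK.
  have Hb : (l.+1 <= K)%N by [].
  transitivity (\sum_(l <= i < l.+1) c * et (l, j)); last by rewrite big_nat1.
  rewrite -(@sum_range_ind _ _ _ _ _ Hb).
  by apply: eq_bigr => k _; rewrite eq_range1.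
rewrite big1 // => k _; rewrite ifF //; apply/negbTE; rewrite neq_ltn.
by rewrite (leq_trans (ltn_ord k) HK).
Qed.
Lemma arg_decomp (R : realType) K (b : nat -> R) inT theta eta z : valid K z ->
  lcmm_arg K b inT theta eta z = thetaT inT theta z
    + Bsum K b (level z) * etaT K inT eta z + offd K b (etaT K inT eta) z.
Proof.
move=> Hz; rewrite /lcmm_arg /Amul -addrA; congr (_ + _).
have HD := diag_sum _ K (Bsum K b (level z)) (etaT K inT eta) z Hz.
transitivity (sumY K (fun y => (if z == y then Bsum K b (level z) else 0) * etaT K inT eta y)
   + sumY K (fun y => gof b z y * etaT K inT eta y)).
  rewrite -sumY_split /sumY; apply: eq_bigr => k _; apply: eq_bigr => i _.
  rewrite -mulrDl /Amat /gof; case: eqP => _; last by rewrite add0r.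
  by rewrite addr0.
rewrite HD /offd; congr (_ + _).
case: ltnP => // HK; rewrite /etaT /level ltnNge HK andbF mulr0 //.
Qed.

Lemma half_lem c e : (0 < e)%N -> ((c.*2 %/ 2 ^ e) = (c.*2.+1 %/ 2 ^ e))%N.
Proof.
move=> He; have -> : (2 ^ e = 2 * 2 ^ e.-1)%N by rewrite -expnS prednK.
rewrite !divnMA; congr (_ %/ _)%N.
by rewrite -!muln2 mulnK // -addn1 divnMDl // divn_small // addn0.
Qed.

Lemma off_sib (R : realType) K (b : nat -> R) (et : node -> R) z :
  offd K b et (left z) = offd K b et (right z).
Proof.
rewrite /offd /sumY; apply: eq_bigr => k _; apply: eq_bigr => i _; congr (_ * _).
case: z => l c; rewrite /gof /left /right /level /= !strict_sub_nat.
case: (ltnP (k : nat) l.+1) => Hk /=.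
  have N1 : forall x, ((l.+1, x) == ((k : nat), (i : nat))) = false.
    by move=> x; apply/negbTE; rewrite xpair_eqE negb_and neq_ltn Hk orbT.
  by rewrite !N1 half_lem // subn_gt0.
by case: ifP; case: ifP.
Qed.
Lemma sib_mu (R : realType) K (b : nat -> R) inT theta eta z :
  valid K (left z) -> valid K (right z) ->
  let el := expR ((thetaT inT theta (left z) + Bsum K b (level (left z)) * etaT K inT eta (left z)) / b (level (left z))) in
  let er := expR ((thetaT inT theta (right z) + Bsum K b (level (left z)) * etaT K inT eta (right z)) / b (level (left z))) in
  lcmm_price K b inT theta eta (left z) = el / (el + er) *
     (lcmm_price K b inT theta eta (left z) + lcmm_price K b inT theta eta (right z)) /\
  lcmm_price K b inT theta eta (right z) = er / (el + er) *
     (lcmm_price K b inT theta eta (left z) + lcmm_price K b inT theta eta (right z)).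
Proof.
move=> Hl Hr el er.
set O := offd K b (etaT K inT eta) (left z).
set k := level (left z).
set Den := \sum_(j < 2 ^ k) expR (lcmm_arg K b inT theta eta (k, j : nat) / b k).
have ml : lcmm_price K b inT theta eta (left z) = el * (expR (O / b k) / Den).
  rewrite /lcmm_price /ptilde arg_decomp // mulrDl expRD mulrA.
  by rewrite -/O.
have mr : lcmm_price K b inT theta eta (right z) = er * (expR (O / b k) / Den).
  rewrite /lcmm_price /ptilde arg_decomp // mulrDl expRD mulrA.
  by rewrite /O off_sib.
have Hne : el + er != 0 by rewrite lt0r_neq0 // addr_gt0 // expR_gt0.
rewrite ml mr -mulrDl !mulrA !divfK //.
Qed.
Lemma desc_inT K inT : is_LCMM_tree K inT -> forall n w z,
  w.1 = (z.1 + n.+1)%N -> (w.2 %/ 2 ^ n.+1)%N = z.2 -> inT w -> inT (left z).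
Proof.
case=> _ _ Hpar Hsib; elim=> [|n IH] [w1 w2] [l c] /= E1 E2 Hw.
  rewrite expn1 divn2 in E2.
  have Hz : inT (l, c).
    have Hne : (w1, w2) != Defs.root by rewrite /Defs.root xpair_eqE E1 addn1.
    by have := Hpar _ Hw Hne; rewrite /parent /= E1 E2 addn1.
  have Ew : w2 = (odd w2 + c.*2)%N by rewrite -E2 odd_double_half.
  move: Hw; rewrite E1 Ew addn1; case: (odd w2) => /= Hw.
    by rewrite Hsib //; move: Hw; rewrite add1n.
  by move: Hw; rewrite add0n.
have Hw' : inT (parent (w1, w2)).
  apply: Hpar => //; apply/eqP; case=> E _; move: E; rewrite E1; lia.
apply: (IH (parent (w1, w2)) (l, c) _ _ Hw'); rewrite /parent /=.
  by rewrite E1 addnS.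
by rewrite -divn2 -divnMA -expnS.
Qed.

Lemma leaf_div_eq K inT z a m d :
  is_LCMM_tree K inT -> valid K z -> ~~ inT (left z) ->
  (a %/ 2 ^ (K - z.1))%N = z.2 -> (m < K)%N -> inT (m, d) ->
  ((a %/ 2 ^ (K - m))%N == d) = (m <= z.1)%N && ((z.2 %/ 2 ^ (z.1 - m))%N == d).
Proof.
case: z => l c /= HT /andP[/= HlK Hc] HnT Ha HmK Hy.
case: (leqP m l) => Hml /=.
  have -> : (2 ^ (K - m) = 2 ^ (K - l) * 2 ^ (l - m))%N.
    by rewrite -expnD; congr (2 ^ _)%N; lia.
  by rewrite divnMA Ha.
apply/negbTE/eqP => Ed; move/negP: HnT; apply.
apply: (@desc_inT _ _ HT (m - l).-1 (m, d) (l, c)) => //=.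
  lia.
have -> : (m - l).-1.+1 = (m - l)%N by lia.
rewrite -Ed -divnMA -expnD -Ha; congr (_ %/ 2 ^ _)%N; lia.
Qed.

Lemma leaf_arg_eq (R : realType) K (b : nat -> R) inT theta eta z a1 a2 :
  is_LCMM_tree K inT -> valid K z -> inT z -> ~~ inT (left z) ->
  (a1 < 2 ^ K)%N -> (a2 < 2 ^ K)%N ->
  (a1 %/ 2 ^ (K - z.1))%N = z.2 -> (a2 %/ 2 ^ (K - z.1))%N = z.2 ->
  lcmm_price K b inT theta eta (K, a1) = lcmm_price K b inT theta eta (K, a2).
Proof.
move=> HT Hz HzT HnT Ha1 Ha2 E1 E2.
have HzK : (z.1 <= K)%N by case/andP: Hz.
case: (eqVneq z.1 K) => HK.
  move: E1 E2; rewrite HK subnn expn0 !divn1 => -> -> //.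
have HzK' : (z.1 < K)%N by rewrite ltn_neqAle HK HzK.
have Hnot : forall a, (a %/ 2 ^ (K - z.1))%N = z.2 -> ~~ inT (K, a).
  move=> a Ea; apply/negP => Hin; move/negP: HnT; apply.
  apply: (@desc_inT _ _ HT (K - z.1).-1 (K, a) z) => //=.
    lia.
  by have -> : (K - z.1).-1.+1 = (K - z.1)%N by lia.
have Harg : lcmm_arg K b inT theta eta (K, a1) = lcmm_arg K b inT theta eta (K, a2).
  rewrite !arg_decomp /valid ?leqnn ?Ha1 ?Ha2 //.
  rewrite /thetaT (negbTE (Hnot _ E1)) (negbTE (Hnot _ E2)) /etaT /level /= ltnn !andbF !mulr0.
  congr (_ + _); rewrite /offd /sumY; apply: eq_bigr => k _; apply: eq_bigr => i _.
  case Hy: (inT (k : nat, i : nat)); last by rewrite /= !mulr0.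
  congr (_ * _); rewrite /gof !strict_sub_nat /level /=.
  have Nk : forall a, ((K, a) == ((k : nat), (i : nat))) = false.
    by move=> a; apply/negbTE; rewrite xpair_eqE negb_and neq_ltn ltn_ord orbT.
  rewrite !Nk ltn_ord /=.
  by rewrite (@leaf_div_eq _ _ _ _ _ _ HT Hz HnT E1 (ltn_ord k) Hy)
             (@leaf_div_eq _ _ _ _ _ _ HT Hz HnT E2 (ltn_ord k) Hy).
by rewrite /lcmm_price /ptilde Harg.
Qed.
Lemma consist_mu (R : realType) K (b : nat -> R) inT theta eta :
  (forall k : nat, (k <= K)%N -> 0 < b k) -> coherent K b inT theta eta ->
  forall y, valid K y -> forall k, (y.1 <= k <= K)%N ->
  Dsum (lcmm_price K b inT theta eta) k y = lcmm_price K b inT theta eta y.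
Proof. by move=> Hb Hcoh; apply: (consist_D _ K b) => // y Hy Hl; exact (Hcoh y Hy Hl). Qed.

Lemma pow_bound l c K : (c < 2 ^ l)%N -> (l <= K)%N -> (c.+1 * 2 ^ (K - l) <= 2 ^ K)%N.
Proof.
move=> Hc HlK.
have -> : (2 ^ K = 2 ^ l * 2 ^ (K - l))%N by rewrite -expnD subnKC.
by rewrite leq_mul2r Hc orbT.
Qed.

Lemma leaf_value (R : realType) K (b : nat -> R) inT theta eta z a :
  (forall k : nat, (k <= K)%N -> 0 < b k) -> coherent K b inT theta eta ->
  is_LCMM_tree K inT -> valid K z -> inT z -> ~~ inT (left z) ->
  (a %/ 2 ^ (K - z.1))%N = z.2 ->
  lcmm_price K b inT theta eta (K, a) =
  lcmm_price K b inT theta eta z / (2 ^ (K - z.1))%:R.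
Proof.
move=> Hb Hcoh HT Hz HzT HnT Ea.
set mu := lcmm_price K b inT theta eta.
have HP : (0 < 2 ^ (K - z.1))%N by rewrite expn_gt0.
case/andP: (Hz) => HlK Hc.
have Hbd := pow_bound _ _ _ Hc HlK.
have Ha : (a < 2 ^ K)%N.
  apply: leq_trans Hbd; have := divn_range _ a z.2 HP; rewrite Ea eqxx.
  by case/andP.
have HD := consist_mu _ _ _ _ _ _ Hb Hcoh _ Hz K; rewrite HlK leqnn -/mu in HD.
rewrite -(HD isT) /Dsum.
rewrite (eq_big_nat _ _ (F2 := fun _ => mu (K, a))); last first.
  move=> j Hj; apply: (leaf_arg_eq _ K b inT theta eta z j a) => //.
    by apply: leq_trans Hbd; case/andP: Hj.
  by apply/eqP; rewrite -divn_range.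
rewrite sumr_const_nat -mulnBl subSnn mul1n -(mulr_natr (mu (K, a))) mulfK //.
by rewrite pnatr_eq0 -lt0n.
Qed.
Lemma pow2_split (R : realType) l K : (l <= K)%N ->
  (2%:R ^+ K : R) = 2%:R ^+ l * (2 ^ (K - l))%:R.
Proof. by move=> H; rewrite natrX -exprD subnKC. Qed.

Lemma neg_key (R : realType) (a x y : R) : a = y * x -> y < 0 -> 0 < x -> 0 <= a -> False.
Proof. move=> ? ? ? ?; nra. Qed.

Lemma prec_stop (R : realType) K j0 l c :
  (l <= K)%N -> (j0 %/ 2 ^ (K - l))%N = c ->
  is_prec (j0%:R / 2%:R ^+ K : R) l -> nalpha R (l, c) = j0%:R / 2%:R ^+ K.
Proof.
move=> HlK Ec [[m Hm] _].
have HX : (0 < 2 ^ (K - l))%N by rewrite expn_gt0.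
have Hl0 : (2%:R ^+ l : R) != 0 by rewrite lt0r_neq0 // two_pow_gt0.
have HX0 : ((2 ^ (K - l))%:R : R) != 0 by rewrite pnatr_eq0 -lt0n.
have Ej : (j0%:R : R) = m%:~R * (2 ^ (K - l))%:R.
  move: Hm; rewrite (pow2_split R l K HlK) => Hm.
  have := congr1 (fun r => r * (2%:R ^+ l * (2 ^ (K - l))%:R)) Hm.
  rewrite /= divfK ?mulf_neq0 // => ->; field; exact: Hl0.
rewrite /nalpha /= Hm; congr (_ / _).
case: m Ej Hm => n Ej Hm.
  rewrite -natrM in Ej; move/eqP: Ej; rewrite eqr_nat => /eqP Ej.
  by rewrite -Ec Ej mulnK.
exfalso.
have Hn : ((Negz n)%:~R : R) < 0 by rewrite ltrz0.
have HXp : (0 : R) < (2 ^ (K - l))%:R by rewrite ltr0n.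
have Hj : (0 : R) <= j0%:R by rewrite ler0n.
exact: neg_key Ej Hn HXp Hj.
Qed.
Definition Inv (R : realType) K (b : nat -> R) inT theta eta j0 (s : alg_state R) : Prop :=
  let mu := lcmm_price K b inT theta eta in
  let z := st_z s in
  [/\ valid K z, inT z, st_iter s = z.1, (forall zv, zv \in st_log s -> zv.2 = mu zv.1) &
   [/\ st_mu s = mu z, (j0 %/ 2 ^ (K - z.1))%N = z.2,
       st_price s + \sum_(j0 <= j < (z.2.+1 * 2 ^ (K - z.1))%N) mu (K, j)
         = \sum_(j0 <= j < 2 ^ K) mu (K, j)
     & forall p, is_prec (j0%:R / 2%:R ^+ K : R) p -> (z.1 <= p)%N]].
Arguments Inv {R}.

Definition step_state (R : realType) K (b : nat -> R) inT theta eta (alpha : R) (s : alg_state R) :=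
      let z := st_z s in
      let zl := left z in let zr := right z in let k := level zl in
      let el := expR ((thetaT inT theta zl + Bsum K b k * etaT K inT eta zl) / b k) in
      let er := expR ((thetaT inT theta zr + Bsum K b k * etaT K inT eta zr) / b k) in
      let mul := el / (el + er) * st_mu s in
      let mur := er / (el + er) * st_mu s in
      let log' := st_log s ++ [:: (zl, mul); (zr, mur)] in
      if alpha < nalpha R zr then
          (AlgState zl mul (st_price s + mur) log' (st_iter s).+1)
      else
          (AlgState zr mur (st_price s) log' (st_iter s).+1).
Arguments step_state {R}.

Lemma alg_loop_S (R : realType) K (b : nat -> R) inT theta eta alpha f s :
  alg_loop K b inT theta eta alpha f.+1 s =
  if (nalpha R (st_z s) != alpha) && inT (left (st_z s))
  then alg_loop K b inT theta eta alpha f (step_state K b inT theta eta alpha s)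
  else s.
Proof. by rewrite /= /step_state; case: ifP => // _; case: ifP. Qed.
Lemma step_inv (R : realType) K (b : nat -> R) inT theta eta j0 (s : alg_state R) :
  (forall k : nat, (k <= K)%N -> 0 < b k) -> coherent K b inT theta eta ->
  is_LCMM_tree K inT -> Inv K b inT theta eta j0 s ->
  (nalpha R (st_z s) != j0%:R / 2%:R ^+ K) -> inT (left (st_z s)) ->
  Inv K b inT theta eta j0 (step_state K b inT theta eta (j0%:R / 2%:R ^+ K) s) /\
  (st_z (step_state K b inT theta eta (j0%:R / 2%:R ^+ K) s)).1 = (st_z s).1.+1.
Proof.
move=> Hb Hcoh HT.
case: s => [[l c] m pr lg it] [/= Hv HzT Hit Hlog [Hm Hj Hsum Hp]] /= Hna HlT.
have [_ Hval _ Hsib] := HT.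
have Hvl : valid K (left (l, c)) := Hval _ HlT.
have HrT : inT (right (l, c)) by rewrite -Hsib.
have Hvr := Hval _ HrT.
have HlK : (l < K)%N by case/andP: Hvl.
have [Sl Sr] := sib_mu R K b inT theta eta (l, c) Hvl Hvr.
have Hcons : lcmm_price K b inT theta eta (l, c) = lcmm_price K b inT theta eta (left (l, c)) + lcmm_price K b inT theta eta (right (l, c)).
  have := consist_mu R K b inT theta eta Hb Hcoh (l, c) Hv l.+1.
  rewrite /= leqnSn HlK => /(_ isT) <-.
  by rewrite D_split //; congr (_ + _); apply: D_self.
set E := (2 ^ (K - l.+1))%N.
have HE0 : (0 < E)%N by rewrite expn_gt0.
have HE : (2 ^ (K - l) = 2 * E)%N by rewrite -expnS subnSK.
have HK2 : (2 ^ K = 2 ^ l.+1 * E)%N by rewrite -expnD subnKC.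
have Hrng : (c * (2 * E) <= j0 < c.+1 * (2 * E))%N.
  by rewrite -HE divn_range ?expn_gt0 // Hj.
have Hltc : (j0%:R / 2%:R ^+ K < nalpha R (right (l, c))) = (j0 < c.*2.+1 * E)%N.
  by rewrite /nalpha /= ltr_dy HK2 mulnCA [X in (X < _)%N]mulnC ltn_pmul2l ?expn_gt0.
have Hdr : Dsum (lcmm_price K b inT theta eta) K (right (l, c)) = lcmm_price K b inT theta eta (right (l, c)).
  by apply: (consist_mu R K b inT theta eta Hb Hcoh _ Hvr K); rewrite /= HlK leqnn.
have Hprec : forall p, is_prec (j0%:R / 2%:R ^+ K : R) p -> (l < p)%N.
  move=> p Hpr; have := Hp p Hpr; rewrite leq_eqVlt => /orP[/eqP Elp|//].
  subst p; exfalso; move/negP: Hna; apply; apply/eqP.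
  exact: prec_stop (ltnW HlK) Hj Hpr.
rewrite /step_state /= Hm Hcons -Sl -Sr Hltc.
case: ifP => Hlt; (split; last by []); rewrite /Inv /=; split => //; try by rewrite Hit.
- move=> zv; rewrite mem_cat !inE => /orP[/Hlog //|/orP[/eqP->|/eqP->]] //.
- split => //.
  + apply/eqP; rewrite -divn_range //; apply/andP; split; lia.
  + rewrite -Hsum -addrA; congr (_ + _).
    have H1 : (j0 <= c.*2.+1 * E)%N by lia.
    have H2 : (c.*2.+1 * E <= c.+1 * 2 ^ (K - l))%N by rewrite HE; lia.
    rewrite [RHS](@big_cat_nat _ _ _ (c.*2.+1 * E)%N _ _ _ _ H1 H2) /= addrC; congr (_ + _).
    rewrite -Hdr /Dsum /= -/E; apply: congr_big_nat => //; rewrite HE; lia.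
- move=> zv; rewrite mem_cat !inE => /orP[/Hlog //|/orP[/eqP->|/eqP->]] //.
- split => //.
  + apply/eqP; rewrite -divn_range //; apply/andP; split; lia.
  + rewrite -Hsum; congr (_ + _); apply: congr_big_nat => //; rewrite HE; lia.
Qed.
Lemma bundle_eq (R : realType) K (mu : node -> R) j0 :
  bundle_price K mu (j0%:R / 2%:R ^+ K) = \sum_(j0 <= j < 2 ^ K) mu (K, j).
Proof.
rewrite /bundle_price big_mkcond /= -(@sum_range_ind _ _ _ _ _ (leqnn (2 ^ K))).
apply: eq_bigr => j _; congr (if _ then _ else _).
rewrite /nalpha /nbeta /= ler_dy leq_pmul2r ?expn_gt0 // ltn_ord andbT.
by rewrite ler_pdivrMr ?two_pow_gt0 // mul1r -natrX ler_nat ltn_ord andbT.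
Qed.

Lemma final_frac (R : realType) K (b : nat -> R) inT theta eta j0 z :
  (forall k : nat, (k <= K)%N -> 0 < b k) -> coherent K b inT theta eta ->
  is_LCMM_tree K inT -> valid K z -> inT z -> (j0 %/ 2 ^ (K - z.1))%N = z.2 ->
  ~~ ((nalpha R z != j0%:R / 2%:R ^+ K) && inT (left z)) ->
  (nbeta R z - j0%:R / 2%:R ^+ K) / (nbeta R z - nalpha R z) * lcmm_price K b inT theta eta z
  = \sum_(j0 <= j < (z.2.+1 * 2 ^ (K - z.1))%N) lcmm_price K b inT theta eta (K, j).
Proof.
move=> Hb Hcoh HT Hz HzT Hj.
case: z Hz HzT Hj => l c Hz HzT /= Hj.
have HP : (0 < 2 ^ (K - l))%N by rewrite expn_gt0.
case/andP: (Hz) => /= HlK Hc.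
have HK2 : (2 ^ K = 2 ^ (K - l) * 2 ^ l)%N by rewrite -expnD subnK.
have Hrng : (c * 2 ^ (K - l) <= j0 < c.+1 * 2 ^ (K - l))%N.
  by rewrite divn_range // Hj.
have Hgap : nbeta R (l, c) - nalpha R (l, c) != 0.
  by rewrite subr_eq0 eq_sym lt_eqF // /nalpha /nbeta /= ltr_dy ltn_pmul2r ?expn_gt0.
rewrite negb_and negbK => /orP[/eqP HA|HnT].
- have Ej0 : j0 = (c * 2 ^ (K - l))%N.
    move: HA => /eqP; rewrite eq_le /nalpha /= !ler_dy HK2 !mulnA !leq_pmul2r ?expn_gt0 //.
    by move=> H; apply/eqP; rewrite eqn_leq andbC.
  rewrite -HA divff // mul1r Ej0.
  have := consist_mu R K b inT theta eta Hb Hcoh (l, c) Hz K; rewrite /= HlK leqnn => /(_ isT).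
  by rewrite /Dsum /=.
- rewrite (eq_big_nat _ _ (F2 := fun _ => lcmm_price K b inT theta eta (l, c) / (2 ^ (K - l))%:R)); last first.
    move=> j /andP[Hj1 Hj2].
    apply: (leaf_value R K b inT theta eta (l, c) j) => //=.
    by apply/eqP; rewrite -divn_range //; apply/andP; split; lia.
  rewrite sumr_const_nat -(mulr_natl (_ / (2 ^ (K - l))%:R)) natrB; last by case/andP: Hrng => _ /ltnW.
  rewrite /nbeta /nalpha /= (pow2_split R l K HlK) natrM -natr1.
  have H1 : (2%:R ^+ l : R) != 0 by rewrite lt0r_neq0 // two_pow_gt0.
  have H2 : ((2 ^ (K - l))%:R : R) != 0 by rewrite pnatr_eq0 -lt0n.
  field.
  by rewrite H1 H2 addrAC subrr add0r oner_neq0.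
Qed.
Lemma loop_inv (R : realType) K (b : nat -> R) inT theta eta j0 :
  (forall k : nat, (k <= K)%N -> 0 < b k) -> coherent K b inT theta eta ->
  is_LCMM_tree K inT -> forall f s,
  Inv K b inT theta eta j0 s -> ((st_z s).1 + f)%N = K ->
  Inv K b inT theta eta j0 (alg_loop K b inT theta eta (j0%:R / 2%:R ^+ K) f s) /\
  ~~ ((nalpha R (st_z (alg_loop K b inT theta eta (j0%:R / 2%:R ^+ K) f s)) != j0%:R / 2%:R ^+ K)
      && inT (left (st_z (alg_loop K b inT theta eta (j0%:R / 2%:R ^+ K) f s)))).
Proof.
move=> Hb Hcoh HT; elim=> [|f IH] s HI Hf.
  split => //=; apply/negP => /andP[_ Hl].
  have [_ Hval _ _] := HT.
  by move: (Hval _ Hl); rewrite /valid /= -Hf addn0 ltnn.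
rewrite alg_loop_S; case: ifP => Hc; last by rewrite Hc.
case/andP: Hc => Hna Hl.
have [HI' Hlev] := step_inv R K b inT theta eta j0 s Hb Hcoh HT HI Hna Hl.
by apply: IH HI' _; rewrite Hlev addSnnS.
Qed.

Lemma init_inv (R : realType) K (b : nat -> R) inT theta eta j0 :
  is_LCMM_tree K inT -> (j0 < 2 ^ K)%N -> Inv K b inT theta eta j0 (alg_init R).
Proof.
move=> HT Hj0; have [Hr _ _ _] := HT.
have Hmu : lcmm_price K b inT theta eta Defs.root = 1.
  rewrite /lcmm_price /ptilde /level /=.
  rewrite -(big_mkord xpredT (fun j => expR (lcmm_arg K b inT theta eta (0%N, j) / b 0%N))).
  by rewrite expn0 big_nat1 divff // gt_eqF // expR_gt0.
rewrite /Inv /alg_init /=; split => //.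
- move=> zv; rewrite inE => /eqP -> /=; by rewrite Hmu.
- split => //.
  + by rewrite subn0 divn_small.
  + by rewrite add0r subn0 mul1n.
Qed.
Theorem theorem5 :
  exists C : nat,
  forall (R : realType) (K : nat) (b : nat -> R) (inT : node -> bool)
         (theta eta : node -> R) (j0 : nat),
    (1 <= K)%N ->
    (forall k : nat, (k <= K)%N -> 0 < b k) ->
    is_LCMM_tree K inT ->
    coherent K b inT theta eta ->
    (j0 < 2 ^ K)%N ->
    let alpha : R := j0%:R / 2%:R ^+ K in
    let mu := lcmm_price K b inT theta eta in
    let s := alg_final K b inT theta eta alpha in
    [/\ (forall zv, zv \in st_log s -> zv.2 = mu zv.1),
        alg_output K b inT theta eta alpha = bundle_price K mu alpha &
        forall p : nat, is_prec alpha p -> (st_iter s <= C * p.+1)%N].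
Proof.
exists 1%N => R K b inT theta eta j0 HK1 Hb HT Hcoh Hj0 alpha mu s.
have [HI Hend] := loop_inv R K b inT theta eta j0 Hb Hcoh HT K (alg_init R)
  (init_inv R K b inT theta eta j0 HT Hj0) (erefl _).
rewrite /alg_output -/(alg_final K b inT theta eta alpha) -/s.
move: HI Hend; rewrite -/(alg_final K b inT theta eta alpha) -/s.
case: s => z m pr lg it [/= Hv HzT Hit Hlog [Hm Hj Hsum Hp]] /= Hend.
split => //.
- rewrite /mu bundle_eq -Hsum Hm; congr (_ + _).
  exact: final_frac.
- move=> p Hpr; rewrite mul1n Hit; apply: leq_trans (Hp p Hpr) _; exact: leqnSn.
Qed.
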